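(* Let $(X,T)$ be a topological dynamical system, $\mathcal{U}$ a finite open cover of $X$ and $f\in C(X,\mathbb{R})$. Then the function $$F:K\mapsto\inf\Big\{\sum_{V\in\mathcal{V}}\sup_{y\in V\cap K}f(y):\ \mathcal{V}\in\mathcal{C}_X,\ \mathcal{V}\succeq\mathcal{U}\Big\}$$ is upper semi-continuous from $\mathcal{K}(X)$ to $\mathbb{R}$.
   Context: A TDS is a compact metric space $(X,d)$ with a homeomorphism $T$. $\mathcal{K}(X)$ is the collection of nonempty closed subsets of $X$ with the Hausdorff metric. $\mathcal{C}_X$ is the set of covers of $X$ (finite families of Borel sets with union $X$); $\mathcal{V}\succeq\mathcal{U}$ means every element of $\mathcal{V}$ lies in some element of $\mathcal{U}$. Terms with $V\cap K=\emptyset$ are omitted from the sum (supremum over the empty set is $-\infty$). *)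

(* Defs.v *)
From HB Require Import structures.
From mathcomp Require Import all_boot all_order all_algebra finmap.
From mathcomp Require Import all_classical all_reals all_analysis.
Set Implicit Arguments. Unset Strict Implicit. Unset Printing Implicit Defensive.
Import Order.TTheory GRing.Theory Num.Theory.
Import numFieldTopology.Exports.
Local Open Scope classical_set_scope.
Local Open Scope ring_scope.

Section defs.
Context {R : realType} {X : metricType R}.

Definition borel_set (A : set X) : Prop := <<s open >> A.

Definition is_cover (V : {fset set X}) : Prop :=
  (forall A, A \in V -> borel_set A) /\
  (forall x : X, exists2 A, A \in V & A x).

Definition is_open_cover (U : {fset set X}) : Prop :=
  (forall A, A \in U -> open A) /\
  (forall x : X, exists2 A, A \in U & A x).

Definition refines (V U : {fset set X}) : Prop :=
  forall A, A \in V -> exists2 B, B \in U & A `<=` B.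

Definition cover_sum (f : X -> R) (K : set X) (V : {fset set X}) : R :=
  (\sum_(A <- V | `[< A `&` K !=set0 >]) sup (f @` (A `&` K)))%R.

Definition Ffun (U : {fset set X}) (f : X -> R) (K : set X) : \bar R :=
  ereal_inf [set (cover_sum f K V)%:E | V in [set V | is_cover V /\ refines V U]].

(** Elements of K(X): nonempty closed subsets. *)
Definition nonempty_closed (K : set X) : Prop := K !=set0 /\ closed K.

Definition set_dist (x : X) (L : set X) : R := inf [set mdist x y | y in L].
Definition hausdorff_dist (K L : set X) : R :=
  Num.max (sup [set set_dist x L | x in K]) (sup [set set_dist y K | y in L]).

Definition usc_hyperspace (F : set X -> \bar R) : Prop :=
  forall K, nonempty_closed K -> forall c : R, (F K < c%:E)%E ->
    exists2 delta : R, 0 < delta &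
      forall L, nonempty_closed L -> hausdorff_dist K L < delta -> (F L < c%:E)%E.

End defs.

(* Main.v *)
Require Import Defs.
From HB Require Import structures.
From mathcomp Require Import all_boot all_order all_algebra finmap.
From mathcomp Require Import all_classical all_reals all_analysis.
From mathcomp Require Import lra.
Import numFieldTopology.Exports.
Set Implicit Arguments. Unset Strict Implicit. Unset Printing Implicit Defensive.
Import Order.TTheory GRing.Theory Num.Theory.
Local Open Scope classical_set_scope.
Local Open Scope ring_scope.

Section helpers.
Context {R : realType} {X : metricType R}.

Lemma fin_delta (T : eqType) (s : seq T) (P : T -> R -> Prop) :
  (forall i r r', 0 < r' -> r' <= r -> P i r -> P i r') ->
  (forall i, i \in s -> exists2 r, 0 < r & P i r) ->
  exists2 r, 0 < r & forall i, i \in s -> P i r.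
Proof.
move=> mono; elim: s => [|a s IH] h; first by exists 1.
have [ra ra0 Pa] := h a (mem_head _ _).
have [rs rs0 Ps] : exists2 r, 0 < r & forall i, i \in s -> P i r.
  by apply: IH => i hi; apply: h; rewrite inE hi orbT.
exists (Num.min ra rs); first by rewrite lt_min ra0.
move=> i; rewrite inE => /orP[/eqP->|hi].
  by apply: (mono _ ra) => //; rewrite ?lt_min ?ra0 ?ge_min ?lexx.
by apply: (mono _ rs) (Ps _ hi); rewrite ?lt_min ?ra0 ?ge_min ?lexx ?orbT.
Qed.

Lemma fin_max (T : eqType) (s : seq T) (g : T -> R) :
  exists M, forall i, i \in s -> g i <= M.
Proof.
elim: s => [|a s [M HM]]; first by exists 0.
exists (Num.max (g a) M) => i; rewrite inE => /orP[/eqP->|hi].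
  by rewrite le_max lexx.
by rewrite le_max HM ?orbT.
Qed.

Lemma sum_const_seq (T : Type) (s : seq T) (e : R) :
  \sum_(i <- s) e = e *+ size s.
Proof. by elim: s => [|a s IH]; rewrite ?big_nil ?big_cons ?IH ?mulrS. Qed.

Lemma open_mball (A : set X) x : open A -> A x ->
  exists2 r, 0 < r & forall y, mdist x y < r -> A y.
Proof.
move=> oA Ax; have : nbhs x A by apply: open_nbhs_nbhs.
move/nbhs_ballP => [r r0 h]; exists r => // y xy; apply: h.
by rewrite ballEmdist.
Qed.

Lemma mball_open (A : set X) :
  (forall x, A x -> exists2 r, 0 < r & forall y, mdist x y < r -> A y) -> open A.
Proof.
move=> h; rewrite openE => x Ax; rewrite /interior; apply/nbhs_ballP.
have [r r0 hr] := h x Ax; exists r => // y; rewrite ballEmdist; exact: hr.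
Qed.

Lemma mball_open_ball (x : X) r : open [set y | mdist x y < r].
Proof.
apply: mball_open => y /= xy; exists (r - mdist x y); first by rewrite subr_gt0.
move=> z yz; rewrite (le_lt_trans (metric_triangle _ y _)) //.
by rewrite -ltrBrDl.
Qed.

Lemma cont_m (f : X -> R) x e : continuous f -> 0 < e ->
  exists2 r, 0 < r & forall y, mdist x y < r -> f y < f x + e.
Proof.
move=> hf e0; have := cvgr_dist_lt _ _ (hf x) _ e0.
move=> H; have : nbhs x (fun t => `|f x - f t| < e) by exact: H.
move=> /nbhs_ballP [r r0 h]; exists r => // y xy.
have := h y; rewrite ballEmdist => /(_ xy) /=.
by rewrite distrC ltr_distl => /andP[].
Qed.

Lemma compact_unif (K : set X) (P : R -> X -> Prop) : compact K ->
  (forall x, K x -> exists2 r, 0 < r &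
     forall x' d, mdist x x' < r -> 0 < d -> d < r -> P d x') ->
  exists2 d, 0 < d & forall x, K x -> P d x.
Proof.
move=> /compact_near_coveringP hK h.
have : \forall d \near (0:R)^'+, K `<=` P d.
  apply: hK.
- move=> x Kx; have [r r0 hr] := h x Kx.
  exists ([set x' | mdist x x' < r], [set d | 0 < d < r]) => /=.
    split; first by apply/nbhs_ballP; exists r => // y; rewrite ballEmdist.
    apply: filterS (filterI (nbhs_right_gt 0) (nbhs_right_lt r0)).
    by move=> d [/= -> ->].
  by move=> [x' d] [/= h1 /andP[h2 h3]]; apply: hr.
move=> H.
have [d [d0 hd]] := filter_ex (filterI (nbhs_right_gt 0) H).
by exists d.
Qed.

Lemma loc_bound (g : X -> R) : compact [set: X] ->
  (forall x, exists2 r, 0 < r & exists M, forall y, mdist x y < r -> g y <= M) ->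
  exists M, forall y, g y <= M.
Proof.
move=> /compact_near_coveringP hX h.
have : \forall M \near +oo, [set: X] `<=` (fun y => g y <= M).
  apply: hX => x _; have [r r0 [M hM]] := h x.
  exists ([set x' | mdist x x' < r], [set M' | M <= M']) => /=.
    split; first by apply/nbhs_ballP; exists r => // y; rewrite ballEmdist.
    exact: nbhs_pinfty_ge (num_real M).
  by move=> [x' M'] [/= h1 h2]; apply: le_trans (hM _ h1) h2.
move=> H; have [M hM] := filter_ex H.
by exists M => y; apply: hM.
Qed.

Lemma f_bound (f : X -> R) : compact [set: X] -> continuous f ->
  exists M, forall y, f y <= M.
Proof.
move=> hX hf; apply: loc_bound => // x.
have [r r0 h] := cont_m x hf (ltr01 : (0:R) < 1).
by exists r => //; exists (f x + 1) => y /h /ltW.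
Qed.

Lemma dist_bound (p : X) : compact [set: X] ->
  exists M : R, forall a b : X, mdist a b <= M.
Proof.
move=> hX.
have [M HM] : exists M : R, forall y, mdist p y <= M.
  apply: loc_bound => // x; exists 1 => //; exists (mdist p x + 1) => y xy.
  by rewrite (le_trans (metric_triangle _ x _)) // lerD2l ltW.
exists (M + M) => a b; rewrite (le_trans (metric_triangle _ p _)) //.
by rewrite lerD // metric_sym.
Qed.

Lemma haus_close (K L : set X) (d M : R) : (forall a b : X, mdist a b <= M) ->
  K !=set0 -> L !=set0 -> hausdorff_dist K L < d ->
  (forall y, L y -> exists2 x, K x & mdist x y < d) /\
  (forall x, K x -> exists2 y, L y & mdist x y < d).
Proof.
move=> hM K0 L0 hd.
have sd_le (y : X) (S : set X) : S !=set0 -> set_dist y S <= M.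
  move=> [x0 Sx0]; rewrite /set_dist.
  apply: le_trans (hM y x0); apply: ge_inf; last by exists x0.
  by exists 0 => _ [x _ <-]; exact: mdist_ge0.
have close (S T : set X) y : S !=set0 -> T !=set0 -> T y ->
    sup [set set_dist y' S | y' in T] < d -> exists2 x, S x & mdist x y < d.
  move=> S0 T0 Ty hs.
  have : set_dist y S < d.
    apply: le_lt_trans hs; apply: ub_le_sup; last by exists y.
    by exists M => _ [y' Ty' <-]; exact: sd_le.
  move/inf_lt; case: S0 => x0 Sx0.
  case=> [|_ [x Sx <-] h]; first by exists (mdist y x0), x0.
  by exists x => //; rewrite metric_sym.
have hd1 : sup [set set_dist y K | y in L] < d.
  by apply: le_lt_trans hd; rewrite le_max lexx orbT.
have hd2 : sup [set set_dist x L | x in K] < d.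
  by apply: le_lt_trans hd; rewrite le_max lexx.
split=> [y Ly|x Kx]; first exact: (close _ _ y K0 L0 Ly hd1).
by have [y Ly h] := close _ _ x L0 K0 Kx hd2; exists y => //; rewrite metric_sym.
Qed.

Lemma bC (A : set X) : borel_set A -> borel_set (~` A).
Proof. by move=> h; rewrite -setTD; apply: sigma_algebraCD. Qed.
Lemma bU (A B : set X) : borel_set A -> borel_set B -> borel_set (A `|` B).
Proof. move=> hA hB; rewrite -bigcup2E; apply: sigma_algebra_bigcup => -[|[|n]] //=.
exact: sigma_algebra0. Qed.
Lemma bI (A B : set X) : borel_set A -> borel_set B -> borel_set (A `&` B).
Proof. move=> hA hB; rewrite -[_ `&` _]setCK setCI; apply: bC; apply: bU; exact: bC. Qed.
Lemma bO (A : set X) : open A -> borel_set A.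
Proof. move=> oA; exact: sub_gen_smallest. Qed.
Lemma bCl (A : set X) : closed A -> borel_set A.
Proof. by move=> cA; rewrite -[A]setCK; apply: bC; apply: bO; exact: closed_openC. Qed.


Lemma exists_notin (T : choiceType) (W : {fset T}) (g : nat -> T) :
  injective g -> exists k, g k \notin W.
Proof.
move=> ig; apply: contrapT => /forallNP H.
have HW k : g k \in W by apply/negPn/negP; apply: H.
have : (#|` [fset g k | k in iota 0 (#|` W|.+1)]%fset| <= #|` W|)%N.
  apply: fsubset_leq_card; apply/fsubsetP => D /imfsetP [k _ ->]; exact: HW.
by rewrite card_imfset //= mem_iota /= undup_id ?iota_uniq //= size_iota ltnn.
Qed.

Fixpoint pseq (h : R -> X) (x0 : X) (r : R) (k : nat) : X :=
  match k with 0 => h r | k'.+1 => h (mdist x0 (pseq h x0 r k')) end.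

Lemma pseq_props (h : R -> X) (x0 : X) (r : R) : 0 < r ->
  (forall e, 0 < e -> h e <> x0 /\ mdist x0 (h e) < e) ->
  (forall k, pseq h x0 r k <> x0 /\ mdist x0 (pseq h x0 r k) < r) /\
  injective (pseq h x0 r).
Proof.
move=> r0 hh.
have step k : pseq h x0 r k <> x0 ->
    pseq h x0 r k.+1 <> x0 /\ mdist x0 (pseq h x0 r k.+1) < mdist x0 (pseq h x0 r k).
  move=> nk; apply: hh; rewrite mdist_gt0; apply/eqP => e; exact: nk (esym e).
have P1 k : pseq h x0 r k <> x0 /\ mdist x0 (pseq h x0 r k) < r.
  elim: k => [|k [nk dk]]; first exact: hh.
  have [nk1 dk1] := step k nk; split => //; exact: lt_trans dk1 dk.
have dec j k : (j < k)%N -> mdist x0 (pseq h x0 r k) < mdist x0 (pseq h x0 r j).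
  elim: k => [//|k IH]; rewrite ltnS leq_eqVlt => /orP[/eqP->|jk].
    exact: (step k (P1 k).1).2.
  exact: lt_trans (step k (P1 k).1).2 (IH jk).
split=> // j k ejk; case: (ltngtP j k) => // [jk|kj].
  by have := dec _ _ jk; rewrite ejk ltxx.
by have := dec _ _ kj; rewrite ejk ltxx.
Qed.

Lemma borel_pair (a b : X) : borel_set ([set a] `|` [set b]).
Proof.
by apply: bU; apply: bCl; apply: accessible_closed_set1;
  apply: hausdorff_accessible; apply: metric_hausdorff.
Qed.

Lemma neg_case (hX : compact [set: X]) (U : {fset set X}) (hU : is_open_cover U)
  (f : X -> R) (hf : continuous f) (K : set X) (c : R) (V : {fset set X})
  (hV : is_cover V) (hVU : refines V U) (x0 : X) (Kx0 : K x0) (fx0 : f x0 < 0)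
  (nonisol : forall e, 0 < e -> exists z, z <> x0 /\ mdist x0 z < e) :
  exists2 d, 0 < d & forall L, nonempty_closed L -> hausdorff_dist K L < d ->
    exists W, [/\ is_cover W, refines W U & cover_sum f L W < c].
Proof.
have [B0 B0U B0x] := hU.2 x0.
have [r1 r10 h1] := open_mball (hU.1 _ B0U) B0x.
have a0 : 0 < - f x0 / 2 by rewrite divr_gt0 // oppr_gt0.
have [r2 r20 h2] := cont_m x0 hf a0.
have [M hM] := dist_bound x0 hX.
set r := Num.min r1 r2.
have r0 : 0 < r by rewrite lt_min r10 r20.
exists r => // L [L0 Lc] hd.
have [_ hKL] := haus_close hM (ex_intro _ x0 Kx0) L0 hd.
have [x' Lx' dx'] := hKL x0 Kx0.
have : forall e, exists z, 0 < e -> z <> x0 /\ mdist x0 z < e.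
  move=> e; case: (boolP (0 < e)) => e0.
    by have [z hz] := nonisol e e0; exists z.
  by exists x0.
case/choice => h hh.
have [pP pinj] := pseq_props r0 hh.
set p := pseq h x0 r in pP pinj.
set a := f x0 / 2.
pose S k := [set x'] `|` [set p k].
have Sinj : injective S.
  move=> j k ejk; apply: pinj.
  have : S k (p j) by rewrite -ejk; right.
  case=> [hj|//].
  have : S j (p k) by rewrite ejk; right.
  by case=> [hk|->]; rewrite ?hj ?hk.
have ball_sub z : mdist x0 z < r -> B0 z /\ f z < a.
  move=> hz; split; first by apply: h1; apply: lt_le_trans hz _; rewrite ge_min lexx.
  have hz2 : mdist x0 z < r2 by apply: lt_le_trans hz _; rewrite ge_min lexx orbT.
  have := h2 z hz2; rewrite /a; lra.
have Sk_sub k z : S k z -> mdist x0 z < r.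
  by case=> ->; [exact: dx'|exact: (pP k).2].
have claim n : exists W, [/\ is_cover W, refines W U &
    cover_sum f L W <= cover_sum f L V + n%:R * a].
  elim: n => [|n [W [hW hWU hWs]]].
    by exists V; split => //; rewrite mul0r addr0.
  have [k hk] := exists_notin W Sinj.
  exists (S k |` W)%fset; split.
  - split.
      move=> A; rewrite in_fset1U => /orP[/eqP->|AW]; first exact: borel_pair.
      exact: hW.1.
    move=> z; have [A AW Az] := hW.2 z; exists A => //.
    by rewrite in_fset1U AW orbT.
  - move=> A; rewrite in_fset1U => /orP[/eqP->|AW]; last exact: hWU.
    by exists B0 => // z /Sk_sub /ball_sub [].
  - rewrite /cover_sum big_mkcond big_fsetU1 // -big_mkcond /=.
    case: asboolP => [_|abs]; last by exfalso; apply: abs; exists x'; split => //; left.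
    have hsup : sup (f @` (S k `&` L)) <= a.
      apply: ge_sup; first by exists (f x'), x' => //; split => //; left.
      by move=> _ [z [Sz Lz] <-]; apply/ltW; exact: (ball_sub z (Sk_sub k z Sz)).2.
    move: hWs; rewrite /cover_sum -natr1 mulrDl mul1r.
    set u := (\sum_(_ <- _ | _) _).
    set w := (\sum_(_ <- _ | _) _).
    set t := n%:R * a.
    move=> hWs; lra.
have [n hn] : exists n : nat, cover_sum f L V + n%:R * a < c.
  exists (Num.trunc ((cover_sum f L V - c) / (- a))).+1.
  have := truncnS_gt ((cover_sum f L V - c) / (- a)).
  rewrite ltr_pdivrMr; last by rewrite /a -mulNr.
  rewrite mulrN; lra.
have [W [hW hWU hWs]] := claim n.
by exists W; split => //; apply: le_lt_trans hWs hn.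
Qed.


Lemma pos_case (hX : compact [set: X]) (U : {fset set X}) (hU : is_open_cover U)
  (f : X -> R) (hf : continuous f) (K : set X) (hK : nonempty_closed K) (c : R)
  (V : {fset set X}) (hV : is_cover V) (hVU : refines V U)
  (hs : cover_sum f K V < c)
  (hiso : forall x, K x -> f x < 0 -> exists2 e, 0 < e & forall z, mdist x z < e -> z = x) :
  exists2 d, 0 < d & forall L, nonempty_closed L -> hausdorff_dist K L < d ->
    exists W, [/\ is_cover W, refines W U & cover_sum f L W < c].
Proof.
case: hK => K0 Kc; have [x0 Kx0] := K0.
have [Mf hMf] := f_bound hX hf.
have [M hM] := dist_bound x0 hX.
set s := cover_sum f K V in hs.
set n := size V.
set eps := (c - s) / (n%:R + 1).
have n1 : 0 < n%:R + 1 :> R by have : 0 <= n%:R :> R := ler0n _ _; lra.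
have eps0 : 0 < eps by rewrite divr_gt0 // subr_gt0.
have neps : n%:R * eps < c - s.
  have : eps * (n%:R + 1) = c - s by rewrite /eps divfK // gt_eqF.
  rewrite mulrDr mulr1 mulrC; lra.
have : forall A : set X, exists B', A \in V -> B' \in U /\ A `<=` B'.
  move=> A; case: (boolP (A \in V)) => AV; last by exists setT.
  by have [B' BU AB] := hVU A AV; exists B'.
case/choice => B hB.
pose sA A := sup (f @` (A `&` K)).
have fub A x : (A `&` K) x -> f x <= sA A.
  move=> hx; apply: ub_le_sup; last by exists x.
  by exists Mf => _ [y _ <-].
pose G A x r := [/\ (A `&` K) x, 0 < r &
  forall y, mdist x y < r -> B A y /\ f y <= f x + eps].
pose nb A := [set y | exists x r, G A x r /\ mdist x y < r].
have F1 A : open (nb A).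
  apply: mball_open => y [x [r [Gx xy]]].
  exists (r - mdist x y); first by rewrite subr_gt0.
  move=> z yz; exists x, r; split => //.
  by rewrite (le_lt_trans (metric_triangle _ y _)) // -ltrBrDl.
have F2 A : nb A `<=` B A.
  by move=> y [x [r [[_ _ h] xy]]]; exact: (h y xy).1.
have F3 A y : nb A y -> exists2 x, (A `&` K) x & f y <= f x + eps.
  by move=> [x [r [[hx _ h] xy]]]; exists x => //; exact: (h y xy).2.
have Kcomp : compact K by apply: (subclosed_compact Kc hX).
have [d0 d00 F4] : exists2 d, 0 < d & forall x, K x ->
    (fun d x => forall y, mdist x y < d -> exists2 A, A \in V & nb A y) d x.
  apply: compact_unif => // x Kx.
  have [A AV Ax] := hV.2 x.
  have [BU AB] := hB A AV.
  have [r1 r10 h1] := open_mball (hU.1 _ BU) (AB x Ax).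
  have [r2 r20 h2] := cont_m x hf eps0.
  set r := Num.min r1 r2.
  have r0 : 0 < r by rewrite lt_min r10 r20.
  have Gx : G A x r.
    split; [by split|by []|].
    move=> y xy; split.
      by apply: h1; apply: lt_le_trans xy _; rewrite ge_min lexx.
    by apply: ltW; apply: h2; apply: lt_le_trans xy _; rewrite ge_min lexx orbT.
  exists (r / 2); first by rewrite divr_gt0.
  move=> x' d xx' d0 dr y x'y; exists A => //; exists x, r; split => //.
  rewrite (le_lt_trans (metric_triangle _ x' _)) //.
  have : mdist x' y < r / 2 by apply: lt_trans x'y dr.
  lra.
have [d1 d10 F5] : exists2 d, 0 < d & forall A, A \in V ->
    (fun A d => A `&` K !=set0 -> sA A < 0 ->
      exists2 x, (A `&` K) x & forall y, mdist x y < d -> y = x) A d.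
  apply: fin_delta.
    move=> A r r' r'0 r'r h AK sneg; have [x hx hx'] := h AK sneg.
    by exists x => // y xy; apply: hx'; apply: lt_le_trans xy r'r.
  move=> A AV.
  case: (pselect (A `&` K !=set0 /\ sA A < 0)) => [[[x hx] sneg]|hn].
    have [e e0 he] := hiso x hx.2 (le_lt_trans (fub A x hx) sneg).
    by exists e => // _ _; exists x.
  by exists 1 => // AK sneg; exfalso; apply: hn.
have [d2 d20 F6] : exists2 d, 0 < d & forall A1, A1 \in V ->
    (fun A1 d => forall A2, A2 \in V -> A1 <> A2 ->
      exists z, ~ (A1 z <-> A2 z) /\ (K z \/ forall x, K x -> d <= mdist x z)) A1 d.
  apply: fin_delta.
    move=> A1 r r' r'0 r'r h A2 A2V ne; have [z [hz1 [hz2|hz2]]] := h A2 A2V ne.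
      by exists z; split => //; left.
    by exists z; split => //; right => x Kx; apply: le_trans r'r (hz2 x Kx).
  move=> A1 A1V.
  apply: (@fin_delta _ V (fun A2 d => A1 <> A2 ->
      exists z, ~ (A1 z <-> A2 z) /\ (K z \/ forall x, K x -> d <= mdist x z))).
    move=> A2 r r' r'0 r'r h ne; have [z [hz1 [hz2|hz2]]] := h ne.
      by exists z; split => //; left.
    by exists z; split => //; right => x Kx; apply: le_trans r'r (hz2 x Kx).
  move=> A2 A2V.
  case: (pselect (A1 = A2)) => [e|ne]; first by exists 1 => //.
  have [z hz] : exists z, ~ (A1 z <-> A2 z).
    apply: contrapT => /forallNP hall; apply: ne; apply/seteqP; split => z.
      by have := hall z => /contrapT [].
    by have := hall z => /contrapT [].
  case: (pselect (K z)) => Kz; first by exists 1 => // _; exists z; split => //; left.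
  have [rho rho0 hrho] := open_mball (closed_openC Kc) Kz.
  exists rho => // _; exists z; split => //; right => x Kx.
  rewrite leNgt; apply/negP => xz; apply: (hrho x) => //.
  by rewrite metric_sym.
set d := Num.min d0 (Num.min d1 d2).
have dd0 : d <= d0 by rewrite ge_min lexx.
have dd1 : d <= d1 by rewrite !ge_min lexx orbT.
have dd2 : d <= d2 by rewrite !ge_min lexx !orbT.
exists d; first by rewrite !lt_min d00 d10 d20.
move=> L [L0 Lc] hd.
have [H1 H2] := haus_close hM K0 L0 hd.
pose g A := (nb A `&` L `&` ~` K) `|` (A `&` K) `|` (A `&` ~` L).
have gK A z : K z -> (g A z <-> A z).
  move=> Kz; split; last by move=> Az; left; right.
  by case=> [[[_ nK]|[]//]|[]//]; exfalso; exact: nK Kz.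
have gL A z : ~ L z -> (g A z <-> A z).
  move=> Lz; split; last by move=> Az; right.
  by case=> [[[[_ L'] _]|[]//]|[]//]; exfalso; exact: Lz L'.
have ginj : {in V &, injective g}.
  move=> A1 A2 A1V A2V eg; apply: contrapT => ne.
  have [z [hz [Kz|far]]] := F6 A1 A1V A2 A2V ne.
    by apply: hz; rewrite -(gK A1 z Kz) -(gK A2 z Kz) eg.
  have Lz : ~ L z.
    move=> Lz; have [x Kx xz] := H1 z Lz.
    have := far x Kx; rewrite leNgt => /negP; apply.
    by apply: lt_le_trans xz dd2.
  by apply: hz; rewrite -(gL A1 z Lz) -(gL A2 z Lz) eg.
exists [fset g A | A in V]%fset; split.
- split.
    move=> D /imfsetP [A /= AV ->].
    have hA := hV.1 A AV.
    apply: bU; first apply: bU.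
    + by apply: bI; [apply: bI; [exact: bO|exact: bCl] | apply: bC; exact: bCl].
    + by apply: bI => //; exact: bCl.
    + by apply: bI => //; apply: bC; exact: bCl.
  move=> z; case: (pselect (K z \/ ~ L z)) => [hz|hz].
    have [A AV Az] := hV.2 z; exists (g A); first exact: in_imfset.
    by case: hz => hz; [apply/(gK A z hz)|apply/(gL A z hz)].
  have Lz : L z by apply: contrapT => nL; apply: hz; right.
  have nKz : ~ K z by move=> Kz; apply: hz; left.
  have [x Kx xz] := H1 z Lz.
  have [A AV nbz] := F4 x Kx z (lt_le_trans xz dd0).
  by exists (g A); [exact: in_imfset | left; left].
- move=> D /imfsetP [A /= AV ->]; have [BU AB] := hB A AV.
  exists (B A) => // y; case=> [[[[nby _] _]|[Ay _]]|[Ay _]];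
    [exact: F2 nby|exact: AB|exact: AB].
- rewrite /cover_sum big_mkcond big_imfset //=.
  apply: (@le_lt_trans _ _ (\sum_(A <- V) (if `[< A `&` K !=set0 >] then sA A + eps else 0))).
    rewrite big_seq [X in _ <= X]big_seq; apply: ler_sum => A AV.
    case: (asboolP (g A `&` L !=set0)) => [[z [gz Lz]]|hne].
      have AK : A `&` K !=set0.
        case: gz => [[[[nbz _] _]|AKz]|[_ nL]]; last 2 first.
        - by exists z.
        - by exfalso; exact: nL Lz.
        by have [x hx _] := F3 A z nbz; exists x.
      case: (asboolP (A `&` K !=set0)) => [_|//].
      apply: ge_sup; first by exists (f z), z.
      move=> _ [y [gy Ly] <-].
      case: gy => [[[[nby _] _]|AKy]|[_ nL]]; last 2 first.
      - by apply: le_trans (fub A y AKy) _; rewrite lerDl ltW.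
      - by exfalso; exact: nL Ly.
        have [x hx fy] := F3 A y nby.
      by apply: le_trans fy _; rewrite lerD2r; exact: fub.
    case: (asboolP (A `&` K !=set0)) => [AK|_ //].
    rewrite leNgt; apply/negP => hneg.
    have sneg : sA A < 0 by lra.
    have [x hx iso] := F5 A AV AK sneg.
    have [y Ly xy] := H2 x hx.2.
    have yx := iso y (lt_le_trans xy dd1).
    by apply: hne; exists x; split; [left; right|rewrite -yx].
  rewrite -big_mkcond big_split /=.
  have hsum : \sum_(A <- V | `[< A `&` K !=set0 >]) eps <= n%:R * eps.
    rewrite big_mkcond (le_trans (_ : _ <= \sum_(A <- V) eps)) //.
      by apply: ler_sum => A _; case: ifP => // _; exact: ltW.
    by rewrite sum_const_seq mulr_natl.
  move: hsum; rewrite -/(cover_sum f K V) -/s.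
  set t := \sum_(_ <- _ | _) _; lra.
Qed.

End helpers.

Unset Implicit Arguments.

Theorem lemma2p3 (R : realType) (X : metricType R)
  (hX : compact [set: X])
  (T : X -> X) (hT : continuous T) (Tinv : X -> X)
  (hTinv : continuous Tinv) (hTK : cancel T Tinv) (hTinvK : cancel Tinv T)
  (U : {fset set X}) (hU : is_open_cover U)
  (f : X -> R) (hf : continuous f) :
  usc_hyperspace (Ffun U f).
Proof.
move=> K hK c hFK.
have [_ [V [hV hVU] <-] hlt] := ereal_inf_lt hFK.
rewrite lte_fin in hlt.
have [d d0 hd] : exists2 d : R, 0 < d & forall L, nonempty_closed L ->
    hausdorff_dist K L < d ->
    exists W, [/\ is_cover W, refines W U & cover_sum f L W < c].
  case: (pselect (exists x0, [/\ K x0, f x0 < 0 &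
      forall e, 0 < e -> exists z, z <> x0 /\ mdist x0 z < e])) =>
      [[x0 [Kx0 fx0 ni]]|hn].
    exact: (neg_case hX hU hf c hV hVU Kx0 fx0 ni).
  apply: (pos_case hX hU hf hK hV hVU hlt) => x Kx fx.
  apply: contrapT => H; apply: hn; exists x; split => // e e0.
  apply: contrapT => H2; apply: H; exists e => // z xz.
  apply: contrapT => nz; apply: H2; exists z; split => //.
exists d => // L hL hKL.
have [W [hW hWU hWs]] := hd L hL hKL.
have : (Ffun U f L <= (cover_sum f L W)%:E)%E.
  by apply: ereal_inf_lbound; exists W.
move=> /le_lt_trans; apply; rewrite lte_fin.
exact: hWs.
Qed.
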